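(* Let $A$ be a cellular algebra with totally ordered cell indices $\lambda_1>\cdots>\lambda_r$ and let $\Lambda_0\subseteq\Lambda$ index its simple modules. For the cellular structure on $A\wr S_n$ described below, the set $(\underline{\Lambda}^r_n)_0$ of multipartitions $(\nu_1,\ldots,\nu_r)$ for which the cell form of $\Delta^{(\nu_1,\ldots,\nu_r)}$ is nonzero consists exactly of those $(\nu_1,\ldots,\nu_r)\in\underline{\Lambda}^r_n$ such that $\nu_i=()$ whenever $\lambda_i\notin\Lambda_0$, and every $\nu_i$ is $p$-restricted.
   Context: $k$ is a field of characteristic $p\ge0$. For a cellular algebra with cell modules $\Delta^\lambda$ carrying cell forms, $\Lambda_0$ is the set of $\lambda$ for which the cell form is not identically zero, and then $L^\lambda=\Delta^\lambda/\mathrm{rad}$ is simple; these give all simples without redundancy. A partition is $p$-restricted if $p=0$, or if $p>0$ and consecutive parts differ by less than $p$ (the empty partition $()$ is always $p$-restricted). $S^\nu$ denotes the cell module of $kS_m$ ($|\nu|=m$) in its standard cellular structure (dual of James's Specht module) with its cell form. $A\wr S_n$ ($kS_n\otimes A^{\otimes n}$ with product $(\sigma;a)(\pi;b)=(\sigma\pi;a_{(1)\pi^{-1}}b_1,\ldots,a_{(n)\pi^{-1}}b_n)$, permutations acting on the right) is cellular with anti-involution $(\sigma;a_1,\ldots,a_n)^*=(\sigma^{-1};a^*_{(1)\sigma},\ldots,a^*_{(n)\sigma})$ and cell indices the set $\underline{\Lambda}^r_n$ of length-$r$ multipartitions of $n$; for $\mu=(|\nu_1|,\ldots,|\nu_r|)$,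 its cell module $\Delta^{(\nu_1,\ldots,\nu_r)}$ is the induced module $\Theta^\mu\bigl((\Delta^{\lambda_1},\ldots,\Delta^{\lambda_r}),(S^{\nu_1},\ldots,S^{\nu_r})\bigr)=\bigl(\Delta(\lambda_1)^{\otimes\mu_1}\otimes\cdots\otimes\Delta(\lambda_r)^{\otimes\mu_r}\otimes S^{\nu_1}\otimes\cdots\otimes S^{\nu_r}\bigr)\otimes_{A\wr S_\mu}A\wr S_n$ (where $A\wr S_\mu$, spanned by $(\sigma;a)$ with $\sigma$ in the Young subgroup $S_\mu\cong\prod S_{\mu_i}$, acts by $(x_1\otimes\cdots\otimes x_n\otimes y_1\otimes\cdots\otimes y_r)(\sigma;a_1,\ldots,a_n)=x_{(1)\sigma^{-1}}a_1\otimes\cdots\otimes x_{(n)\sigma^{-1}}a_n\otimes y_1\sigma_1\otimes\cdots\otimes y_r\sigma_r$), with cell form $\langle x\otimes y\otimes\gamma,x'\otimes y'\otimes\gamma'\rangle=\delta_{\gamma\gamma'}\prod_i\langle y_i,y'_i\rangle\prod_j\langle x_j,x'_j\rangle$, where $x\otimes y\otimes\gamma$ denotes $(x_1\otimes\cdots\otimes x_n\otimes y_1\otimes\cdots\otimes y_r)\otimes(\gamma;1,\ldots,1)$ for $\gamma$ a minimal-length right coset representative of $S_\mu$ in $S_n$. $L^{(\nu_1,\ldots,\nu_r)}$ denotes the quotient of $\Delta^{(\nu_1,\ldots,\nu_r)}$ by the radical of its cell form. *)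

(* Defs.v *)
From HB Require Import structures.
From mathcomp Require Import all_boot all_order all_algebra all_fingroup all_field.
Set Implicit Arguments. Unset Strict Implicit. Unset Printing Implicit Defensive.
Import GRing.Theory.
Local Open Scope ring_scope.

Definition is_char (k : fieldType) (p : nat) : Prop :=
  (p = 0%N /\ forall q : nat, q \notin [pchar k]) \/ p \in [pchar k].

Definition is_partition (la : seq nat) : bool :=
  sorted geq la && all (fun x => 0 < x)%N la.

(* p-restricted: p = 0, or la_i - la_{i+1} < p for every i (with la_{l+1} = 0). *)
Definition p_restricted (p : nat) (la : seq nat) : bool :=
  (p == 0%N) || all (fun i => nth 0%N la i - nth 0%N la i.+1 < p)%N (iota 0 (size la)).

(* Cell indices are 'I_r, totally ordered by lambda_1 > ... > lambda_r, i.e.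
   index i (0-based) is larger than index j iff i < j as naturals.
   M i = #M(lambda_i); C i s t = C^{lambda_i}_{s t}. *)
Section Cellular.
Variables (k : fieldType) (A : falgType k).

Definition cell_basis (r : nat) (M : 'I_r -> nat)
    (C : forall i : 'I_r, 'I_(M i) -> 'I_(M i) -> A) : seq A :=
  flatten [seq flatten [seq [seq C i s t | t <- enum 'I_(M i)] | s <- enum 'I_(M i)]
          | i <- enum 'I_r].

Definition cell_above (r : nat) (M : 'I_r -> nat)
    (C : forall i : 'I_r, 'I_(M i) -> 'I_(M i) -> A) (i : 'I_r) : {vspace A} :=
  let above := filter (fun j0 : 'I_r => (j0 < i)%N) (enum 'I_r) in
  span (flatten [seq flatten [seq [seq C j s t | t <- enum 'I_(M j)] | s <- enum 'I_(M j)]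
          | j <- above]).

Unset Implicit Arguments.
Record cellular_datum := CellularDatum {
  cd_r : nat;
  cd_M : 'I_cd_r -> nat;
  cd_C : forall i : 'I_cd_r, 'I_(cd_M i) -> 'I_(cd_M i) -> A;
  cd_star : A -> A;
  (* the cell form phi_{lambda_i} on Delta(lambda_i), in the basis C_s *)
  cd_phi : forall i : 'I_cd_r, 'I_(cd_M i) -> 'I_(cd_M i) -> k;
  cd_basis : basis_of fullv (cell_basis cd_C);
  cd_star_lin : forall (a : k) (x y : A), cd_star (a *: x + y) = a *: cd_star x + cd_star y;
  cd_star_anti : forall x y : A, cd_star (x * y) = cd_star y * cd_star x;
  cd_star_invol : forall x : A, cd_star (cd_star x) = x;
  cd_star_C : forall (i : 'I_cd_r) (s t : 'I_(cd_M i)), cd_star (cd_C i s t) = cd_C i t s;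
  cd_mul : forall (i : 'I_cd_r) (s : 'I_(cd_M i)) (a : A),
    exists ra : 'I_(cd_M i) -> k, forall t : 'I_(cd_M i),
      a * cd_C i s t - \sum_(u < cd_M i) ra u *: cd_C i u t \in cell_above cd_C i;
  cd_phi_def : forall (i : 'I_cd_r) (s t u v : 'I_(cd_M i)),
    cd_C i s t * cd_C i u v - cd_phi i t u *: cd_C i s v \in cell_above cd_C i
}.
Set Implicit Arguments.

Definition in_Lambda0 (D : cellular_datum) (i : 'I_(cd_r D)) : Prop :=
  exists s t, cd_phi D i s t != 0.

End Cellular.
Arguments cellular_datum {k} A.
Arguments cd_r {k A}.
Arguments cd_M {k A}.
Arguments cd_C {k A}.
Arguments cd_phi {k A}.
Arguments cd_star {k A}.
Arguments in_Lambda0 {k A}.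

(* Initial nu-tableau t^nu: positions 0..m-1 filled row by row. *)
Definition rowpos (la : seq nat) (q : nat) : nat :=
  count (fun i => sumn (take i.+1 la) <= q)%N (iota 0 (size la)).
Definition colpos (la : seq nat) (q : nat) : nat := (q - sumn (take (rowpos la q) la))%N.

(* Tableau t_w (w : 'S_m) has entry w q at position q; then t_w sigma = t_{w * sigma}.
   R_{t_w} = row stabiliser; [t_w] = column tabloid (entry |-> column). *)
Definition row_stab (la : seq nat) (w : 'S_(sumn la)) : {set 'S_(sumn la)} :=
  [set sg : 'S_(sumn la) | [forall j, rowpos la (w^-1 (sg j))%g == rowpos la (w^-1 j)%g]].

Arguments row_stab : clear implicits.

Definition col_tabloid (la : seq nat) (w : 'S_(sumn la)) : 'I_(sumn la) -> nat :=
  fun j => colpos la (w^-1 j)%g.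

Arguments col_tabloid : clear implicits.

(* S^nu is spanned by the (row-signed) dual polytabloids
   f_t = sum_{sigma in R_t} sgn(sigma) [t sigma] in the column-tabloid module,
   whose standard form is <[t],[s]> = delta.  Value of the cell form on f_{t_w}, f_{t_v}: *)
Definition specht_form (k : fieldType) (la : seq nat) (w v : 'S_(sumn la)) : k :=
  \sum_(sg in row_stab la w) \sum_(tau in row_stab la v)
    ((-1) ^+ odd_perm sg * (-1) ^+ odd_perm tau *
     ([forall j, col_tabloid la (w * sg)%g j == col_tabloid la (v * tau)%g j])%:R).

Arguments specht_form : clear implicits.

Definition is_multipartition (r n : nat) (nu : 'I_r -> seq nat) : Prop :=
  (forall i, is_partition (nu i)) /\ (\sum_(i < r) sumn (nu i))%N = n.

Definition blockof (mu : seq nat) (j : nat) : nat :=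
  count (fun i => sumn (take i.+1 mu) <= j)%N (iota 0 (size mu)).

Definition young (n : nat) (mu : seq nat) : {set 'S_n} :=
  [set sg : 'S_n | [forall j : 'I_n, blockof mu (sg j) == blockof mu j]].

Definition inversions (n : nat) (sg : 'S_n) : nat :=
  #|[set ij : 'I_n * 'I_n | (ij.1 < ij.2)%N && (sg ij.2 < sg ij.1)%N]|.

Definition min_coset_rep (n : nat) (mu : seq nat) (g : 'S_n) : bool :=
  [forall tau in young n mu, (inversions g <= inversions (tau * g)%g)%N].

Section Wreath.
Variables (k : fieldType) (A : falgType k) (D : cellular_datum A) (n : nat)
          (nu : 'I_(cd_r D) -> seq nat).

Definition wr_mu (i : 'I_(cd_r D)) : nat := sumn (nu i).

(* The cell form of Delta^{(nu_1,...,nu_r)} on spanning vectors x (x) y (x) gamma: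
   x = tensor of basis vectors of Delta(lambda_i)^{(x) mu_i}, x i j : 'I_(M i),
   y i = dual polytabloid of S^{nu_i}, gamma a distinguished coset rep. *)
Definition wreath_form
    (x x' : forall i : 'I_(cd_r D), 'I_(wr_mu i) -> 'I_(cd_M D i))
    (y y' : forall i : 'I_(cd_r D), 'S_(sumn (nu i)))
    (g g' : 'S_n) : k :=
  (g == g')%:R *
  (\prod_(i < cd_r D) specht_form k (nu i) (y i) (y' i)) *
  (\prod_(i < cd_r D) \prod_(j < wr_mu i) cd_phi D i (x i j) (x' i j)).

Definition wreath_form_nonzero : Prop :=
  let mus := [seq wr_mu i | i <- enum 'I_(cd_r D)] in
  exists (g g' : 'S_n), [/\ min_coset_rep mus g, min_coset_rep mus g' &
  exists x x' y y', wreath_form x x' y y' g g' != 0].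

End Wreath.
Arguments wreath_form_nonzero {k A} D n nu.

(* Main.v *)
Require Import Defs.
From HB Require Import structures.
From mathcomp Require Import all_boot all_order all_algebra all_fingroup all_field.
From mathcomp Require Import all_solvable.
From mathcomp Require Import zify.

Module P1.
Set Implicit Arguments. Unset Strict Implicit. Unset Printing Implicit Defensive.

Lemma rowpos_cons x la q : rowpos (x :: la) q = if q < x then 0 else (rowpos la (q - x)).+1.
Proof.
rewrite /rowpos /= -(addn0 1) iotaDl count_map /= take0 addn0.
case: ltnP => hq.
  apply/eqP; rewrite add0n -leqn0 leqNgt -has_count; apply/hasPn => i _ /=.
  by rewrite -ltnNge (leq_trans hq) // leq_addr.
rewrite add1n; congr _.+1; apply: eq_count => i /=.
by rewrite leq_subRL // add1n.
Qed.

Lemma colpos_cons x la q : colpos (x :: la) q = if q < x then q else colpos la (q - x).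
Proof.
rewrite /colpos rowpos_cons; case: ltnP => hq /=; first by rewrite subn0.
by rewrite subnDA.
Qed.

Definition posn (la : seq nat) a c := sumn (take a la) + c.

Lemma posn_cons x la a c : posn (x :: la) a.+1 c = x + posn la a c.
Proof. by rewrite /posn /= addnA. Qed.

Lemma rowpos_lt la q : q < sumn la -> rowpos la q < size la.
Proof.
elim: la q => [|x la IH] q //= hq; rewrite rowpos_cons; case: (ltnP q x) => // hx.
by rewrite /= ltnS IH // ltn_subLR.
Qed.

Lemma colpos_lt la q : q < sumn la -> colpos la q < nth 0 la (rowpos la q).
Proof.
elim: la q => [|x la IH] q //= hq; rewrite rowpos_cons colpos_cons; case: (ltnP q x) => // hx /=.
by rewrite IH // ltn_subLR.
Qed.

Lemma posn_rc la q : q < sumn la -> posn la (rowpos la q) (colpos la q) = q.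
Proof.
elim: la q => [|x la IH] q //= hq; rewrite rowpos_cons colpos_cons; case: (ltnP q x) => hx /=.
  by rewrite /posn take0.
by rewrite posn_cons IH ?ltn_subLR // subnKC.
Qed.

Lemma posn_lt la a c : a < size la -> c < nth 0 la a -> posn la a c < sumn la.
Proof.
elim: la a => [|x la IH] [|a] //= ha hc.
  by rewrite /posn take0 /= (leq_trans hc) // leq_addr.
by rewrite posn_cons ltn_add2l IH.
Qed.

Lemma rowpos_posn la a c : a < size la -> c < nth 0 la a -> rowpos la (posn la a c) = a.
Proof.
elim: la a => [|x la IH] [|a] //= ha hc.
  by rewrite /posn take0 /= rowpos_cons hc.
by rewrite posn_cons rowpos_cons ltnNge leq_addr /= addKn IH.
Qed.

Lemma colpos_posn la a c : a < size la -> c < nth 0 la a -> colpos la (posn la a c) = c.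
Proof.
elim: la a => [|x la IH] [|a] //= ha hc.
  by rewrite /posn take0 /= colpos_cons hc.
by rewrite posn_cons colpos_cons ltnNge leq_addr /= addKn IH.
Qed.

Lemma geq_trans : transitive geq.
Proof. by move=> y x z hxy hyz; apply: leq_trans hyz hxy. Qed.

Definition clen (la : seq nat) c := count (fun x => c < x) la.

Lemma clenP la a c : sorted geq la -> (a < clen la c) = (c < nth 0 la a).
Proof.
elim: la a => [|x la IH] a; first by rewrite /clen /= nth_nil.
move=> /= hs; have hs' : sorted geq la := path_sorted hs.
have hall : all (geq x) la by exact: (order_path_min geq_trans hs).
case: (ltnP c x) => hcx.
  rewrite -[true + _]/(clen la c).+1.
  by case: a => [|a] //=; rewrite ltnS IH.
have h0 : clen la c = 0.
  apply/eqP; rewrite -leqn0 leqNgt -has_count; apply/hasPn => y hy /=.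
  by rewrite -leqNgt (leq_trans _ hcx) //; move/allP: hall => /(_ y hy).
rewrite -[false + _]/(clen la c) h0.
case: a => [|a] /=; first by rewrite ltnn ltnNge hcx.
symmetry; apply/negbTE; rewrite -leqNgt.
case: (ltnP a (size la)) => ha; last by rewrite nth_default.
by apply: leq_trans hcx; move/allP: hall; apply; apply: mem_nth.
Qed.

Lemma clen_le la c : clen la c <= size la.
Proof. exact: count_size. Qed.

Lemma nth_mono la i j : sorted geq la -> i <= j -> nth 0 la j <= nth 0 la i.
Proof.
move=> hs hij; case: (ltnP j (size la)) => hj; last by rewrite nth_default.
have hi : i < size la by apply: leq_ltn_trans hj.
have := sorted_leq_nth geq_trans (fun x => leqnn x) 0 hs.
by move=> /(_ i j); rewrite !inE; apply.
Qed.

End P1.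
Import P1.

Module P2.
Set Implicit Arguments. Unset Strict Implicit. Unset Printing Implicit Defensive.

Section Pos.
Variable la : seq nat.
Hypothesis hla : sorted geq la.
Local Notation N := (sumn la).

Definition row (q : 'I_N) := rowpos la q.
Definition col (q : 'I_N) := colpos la q.
Definition L (q : 'I_N) := clen la (col q).

Lemma row_lt q : row q < size la.
Proof. exact: rowpos_lt. Qed.
Lemma col_lt q : col q < nth 0 la (row q).
Proof. exact: colpos_lt. Qed.
Lemma row_ltL q : row q < L q.
Proof. by rewrite /L clenP // col_lt. Qed.
Lemma L_le q : L q <= size la.
Proof. exact: clen_le. Qed.

Lemma pos_eq q1 q2 : row q1 = row q2 -> col q1 = col q2 -> q1 = q2.
Proof.
move=> hr hc; apply: val_inj => /=.
by rewrite -(posn_rc (ltn_ord q1)) -(posn_rc (ltn_ord q2)) -/(row q1) -/(col q1) hr hc.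
Qed.

Lemma nth_size a c : c < nth 0 la a -> a < size la.
Proof. by move=> h; case: ltnP => // ha; move: h; rewrite nth_default. Qed.

Definition mkpos (d : 'I_N) a c : 'I_N := insubd d (posn la a c).

Lemma mkpos_val d a c : c < nth 0 la a -> val (mkpos d a c) = posn la a c.
Proof. by move=> h; rewrite val_insubd posn_lt // (nth_size h). Qed.
Lemma mkpos_row d a c : c < nth 0 la a -> row (mkpos d a c) = a.
Proof. by move=> h; rewrite /row mkpos_val // rowpos_posn // (nth_size h). Qed.
Lemma mkpos_col d a c : c < nth 0 la a -> col (mkpos d a c) = c.
Proof. by move=> h; rewrite /col mkpos_val // colpos_posn // (nth_size h). Qed.

Lemma clenP' q a : (a < L q) = (col q < nth 0 la a).
Proof. exact: clenP. Qed.

Definition nuf (q : 'I_N) : 'I_N := mkpos q (L q - 1 - row q) (col q).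
Lemma nuf_ok q : col q < nth 0 la (L q - 1 - row q).
Proof. by rewrite -clenP' //; have := row_ltL q; lia. Qed.
Lemma nuf_row q : row (nuf q) = L q - 1 - row q.
Proof. exact: mkpos_row (nuf_ok q). Qed.
Lemma nuf_col q : col (nuf q) = col q.
Proof. exact: mkpos_col (nuf_ok q). Qed.
Lemma nuf_L q : L (nuf q) = L q.
Proof. by rewrite /L nuf_col. Qed.
Lemma nufK : involutive nuf.
Proof.
move=> q; apply: pos_eq; last by rewrite !nuf_col.
rewrite !nuf_row nuf_L; have := row_ltL q; lia.
Qed.
Definition nu : 'S_N := perm (can_inj nufK).
Lemma nuE q : nu q = nuf q.
Proof. by rewrite permE. Qed.

Lemma key_ab (al be : 'S_N) :
  (forall x, row (al x) = row x) ->
  (forall x, row (nuf (be x)) = row (nuf x)) ->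
  (forall x, col (al x) = col (be x)) ->
  al = be.
Proof.
move=> hA hB hC.
suff K : forall k d, size la <= d + k -> forall x, d <= row (nuf x) -> clen la (col (al x)) = L x.
  apply/permP => x; apply: pos_eq; last exact: hC.
  have e1 := hB x; rewrite !nuf_row in e1.
  have e2 : L (be x) = L x by rewrite /L -hC (K (size la) 0).
  rewrite hA; move: e1; rewrite e2; have := row_ltL x; have := row_ltL (be x).
  rewrite e2; lia.
elim=> [|k IH] d hd x hx.
  by have := row_lt (nuf x); lia.
case: (ltnP d (row (nuf x))) => hdx.
  by apply: (IH d.+1) => //; lia.
have {hdx hx} hdx : row (nuf x) = d by lia.
have IH' : forall y, d < row (nuf y) -> clen la (col (al y)) = L y.
  by move=> y hy; apply: (IH d.+1) => //; lia.
have hle : forall y, row (nuf y) = d -> clen la (col (al y)) <= L y.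
  move=> y hy; rewrite leqNgt; apply/negP => hlt.
  set a := row y; set Ly := L y.
  pose Y := [set z : 'I_N | (row z == a) && (col z < nth 0 la Ly)].
  have yY : y \notin Y by rewrite inE -clenP' ltnn andbF.
  have sub : al @: (y |: Y) \subset Y.
    apply/subsetP => z /imsetP [u hu ->]; move: hu; rewrite in_setU1 => /orP [/eqP -> | uY].
      by rewrite inE hA eqxx /= -clenP'.
    move: uY; rewrite inE => /andP [/eqP ua uc].
    rewrite inE hA ua eqxx /= -clenP'.
    have hLu : Ly < L u by rewrite clenP'.
    rewrite /L IH' //.
    move: hy; rewrite !nuf_row ua -/Ly; have := row_ltL y; rewrite -/a -/Ly; lia.
  have := subset_leq_card sub; rewrite card_imset; last exact: perm_inj.
  by rewrite cardsU1 yY add1n ltnn.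
have hs1 : \sum_(z | row (nuf z) == d) clen la (col (al z)) =
           \sum_(z | row z == d) clen la (col z).
  rewrite [RHS](reindex_inj (h := fun z => nu (be z))) /=; last first.
    by move=> u v /perm_inj /perm_inj.
  apply: eq_big => z; first by rewrite nuE hB.
  by move=> _; rewrite nuE nuf_col hC.
have hs2 : \sum_(z | row (nuf z) == d) L z = \sum_(z | row z == d) clen la (col z).
  rewrite [RHS](reindex_inj (h := nu)) /=; last exact: perm_inj.
  by apply: eq_big => z; rewrite nuE // => _; rewrite nuf_col.
have := @leqif_sum _ (fun z => row (nuf z) == d) (fun z => clen la (col (al z)) == L z) _ _
  (fun z hz => leqif_eq (hle z (eqP hz))).
move=> [_]; rewrite hs1 hs2 eqxx => /esym /forall_inP /(_ x).
by rewrite hdx eqxx => /(_ isT) /eqP.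
Qed.

End Pos.

End P2.
Import P2.

Module P3.
Set Implicit Arguments. Unset Strict Implicit. Unset Printing Implicit Defensive.
Import GRing.Theory.
Local Open Scope ring_scope.

Lemma row_stab_group la (w : 'S_(sumn la)) : group_set (row_stab la w).
Proof.
apply/group_setP; split; first by rewrite inE; apply/forallP => j; rewrite perm1.
move=> x y; rewrite !inE => /forallP hx /forallP hy; apply/forallP => j.
by rewrite permM (eqP (hy (x j))) (eqP (hx j)).
Qed.

Section PartA.
Variable la : seq nat.
Hypothesis hla : sorted geq la.
Local Notation N := (sumn la).
Local Notation nu := (nu hla).
Local Notation nuf := (@nuf la).

Lemma nuV j : nu^-1%g j = nuf j.
Proof.
by rewrite -{1}(nufK hla j) -(nuE hla) permK.
Qed.

Lemma stab1P (sg : 'S_N) : sg \in row_stab la 1 -> forall j, row (sg j) = row j.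
Proof. by rewrite inE => /forallP h j; have := h j; rewrite invg1 !perm1 => /eqP. Qed.

Lemma stabnuP (sg : 'S_N) : sg \in row_stab la nu -> forall j, row (nuf (sg j)) = row (nuf j).
Proof. by rewrite inE => /forallP h j; have := h j; rewrite !nuV => /eqP. Qed.

Lemma nu_in_stab (sg : 'S_N) : sg \in row_stab la 1 -> (forall j, L (sg j) = L j) ->
  sg \in row_stab la nu.
Proof.
move=> /stab1P h1 hL; rewrite inE; apply/forallP => j; rewrite !nuV.
by rewrite -!/(row _) !(nuf_row hla) hL h1.
Qed.

Lemma coltab_1 (sg : 'S_N) j : col_tabloid la (1 * sg)%g j = col (sg^-1%g j).
Proof. by rewrite /col_tabloid mul1g. Qed.

Lemma coltab_nu (sg : 'S_N) j : col_tabloid la (nu * sg)%g j = col (sg^-1%g j).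
Proof. by rewrite /col_tabloid invMg permM nuV; exact: (nuf_col hla). Qed.

Lemma key_st (sg tau : 'S_N) : sg \in row_stab la 1 -> tau \in row_stab la nu ->
  [forall j, col_tabloid la (1 * sg)%g j == col_tabloid la (nu * tau)%g j] -> sg = tau.
Proof.
move=> /stab1P h1 /stabnuP h2 /forallP h3.
suff : sg^-1%g = tau^-1%g by move/(congr1 (fun x => x^-1)%g); rewrite !invgK.
apply: (key_ab hla).
- by move=> x; rewrite -{2}(permKV sg x) h1.
- by move=> x; rewrite -{2}(permKV tau x) h2.
- by move=> x; have := h3 x; rewrite coltab_1 coltab_nu => /eqP.
Qed.

Lemma specht_1nu (k : fieldType) :
  specht_form k la 1 nu = (#|row_stab la 1 :&: row_stab la nu|)%:R.
Proof.
rewrite /specht_form.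
transitivity (\sum_(sg in row_stab la 1) ((sg \in row_stab la nu) : nat)%:R : k).
  apply: eq_bigr => sg hsg.
  case: (boolP (sg \in row_stab la nu)) => hnu.
    rewrite (bigD1 sg) //= big1 ?addr0.
      by rewrite -signr_addb addbb expr0 mul1r; congr _%:R; apply/eqP; rewrite eqb1;
        apply/forallP => j; rewrite coltab_1 coltab_nu.
    move=> tau /andP [htau hne]; case: (boolP [forall _, _]) => hc; last by rewrite mulr0.
    by move: hne; rewrite (key_st hsg htau hc) eqxx.
  apply: big1 => tau htau; case: (boolP [forall _, _]) => hc; last by rewrite mulr0.
  by move: hnu; rewrite (key_st hsg htau hc) htau.
rewrite -natr_sum; congr _%:R.
rewrite -sum1_card (big_setID (row_stab la nu)) /= setIC.
rewrite [X in (_ + X)%N]big1 ?addn0; last by move=> i; rewrite inE => /andP [/negbTE ->].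
by apply: eq_bigr => i; rewrite inE => /andP [->].
Qed.

End PartA.

End P3.
Import P3.

Module P4.
Set Implicit Arguments. Unset Strict Implicit. Unset Printing Implicit Defensive.
Import GRing.Theory.

Section PartA2.
Variable la : seq nat.
Hypothesis hla : sorted geq la.
Local Notation N := (sumn la).
Local Notation nu := (nu hla).
Local Notation nuf := (@nuf la).

Lemma cell_card p (j : 'I_N) : p != 0 -> p_restricted p la ->
  #|[set q : 'I_N | (row q == row j) && (L q == L j)]| < p.
Proof.
move=> p0 hp; set C := [set q | _].
have hLj := row_ltL hla j; have hLs := L_le j.
set Lj := L j in hLj hLs *.
have hdiff : nth 0 la (Lj - 1) - nth 0 la Lj < p.
  move: hp; rewrite /p_restricted (negbTE p0) /= => /allP /(_ (Lj - 1)).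
  rewrite mem_iota add0n => /(_ ltac:(lia)).
  by have -> : (Lj - 1).+1 = Lj by lia.
apply: leq_ltn_trans hdiff.
rewrite cardE -(size_map (@col la) (enum C)) -(size_iota (nth 0 la Lj) (nth 0 la (Lj - 1) - nth 0 la Lj)).
apply: uniq_leq_size.
  rewrite map_inj_in_uniq ?enum_uniq // => x y.
  rewrite !mem_enum !inE => /andP [/eqP hx _] /andP [/eqP hy _] hc.
  by apply: pos_eq => //; rewrite hx hy.
move=> c /mapP [q]; rewrite mem_enum inE => /andP [_ /eqP hq] ->.
have h1 : ~~ (Lj < L q) by rewrite hq ltnn.
have h2 : Lj - 1 < L q by rewrite hq; lia.
rewrite (clenP' hla) in h1; rewrite (clenP' hla) in h2.
have hm : nth 0 la Lj <= nth 0 la (Lj - 1) by apply: nth_mono => //; lia.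
rewrite mem_iota; lia.
Qed.

Lemma card_H_nz (k : fieldType) p : is_char k p -> p_restricted p la ->
  ((#|row_stab la 1 :&: row_stab la nu|)%:R != 0 :> k)%R.
Proof.
pose G1 := Group (row_stab_group (1 : 'S_N)).
pose G2 := Group (row_stab_group nu).
have -> : row_stab la 1 :&: row_stab la nu = (G1 :&: G2)%G by [].
move=> [[-> h0] | hp] hres.
  have /pcharf0P -> : has_char0 k by move=> q; rewrite inE; apply/negbTE/h0.
  by rewrite -lt0n cardG_gt0.
have pr := pcharf_prime hp.
rewrite -(dvdn_pcharf hp); apply/negP => hdiv.
have [x xH ox] := Cauchy pr hdiv.
move: xH; rewrite inE => /andP [x1 x2].
have hrow := stab1P x1; have hnu := stabnuP x2.
have hL : forall j, L (x j) = L j.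
  move=> j; have := hnu j; rewrite !(nuf_row hla) hrow.
  have := row_ltL hla j; have := row_ltL hla (x j); rewrite hrow; lia.
have hit : forall n j, row ((x ^+ n)%g j) = row j /\ L ((x ^+ n)%g j) = L j.
  elim=> [|n IH] j; first by rewrite expg0 perm1.
  by rewrite expgSr permM hrow hL; apply: IH.
have hfix : forall j, x j = j.
  move=> j.
  have sub : porbit x j \subset [set q | (row q == row j) && (L q == L j)].
    apply/subsetP => y /porbitP [i ->]; rewrite inE.
    by have [-> ->] := hit i j; rewrite !eqxx.
  have hc := leq_ltn_trans (subset_leq_card sub) (cell_card j (lt0n_neq0 (prime_gt0 pr)) _); move/(_ hres) in hc.
  have hd : #|porbit x j| %| p by rewrite porbitE -ox; apply: dvdn_orbit.
  have : #|porbit x j| = 1.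
    move/primeP: pr => [_ /(_ _ hd)] /orP [/eqP // | /eqP e].
    by rewrite e ltnn in hc.
  by move=> e; have := iter_porbit x j; rewrite e.
have : x = 1%g by apply/permP => j; rewrite hfix perm1.
by move=> e; move: ox pr; rewrite e order1 => <-.
Qed.

End PartA2.

End P4.
Import P4.

Module P5.
Set Implicit Arguments. Unset Strict Implicit. Unset Printing Implicit Defensive.

Section Cyc.
Variables (b p : nat).
Hypothesis hp : 1 < p.
Definition cyc c := if (b <= c) && (c < b + p) then (if c.+1 == b + p then b else c.+1) else c.

Lemma cyc_inj : injective cyc.
Proof.
move=> x y; rewrite /cyc.
case: ifP => hx; case: ifP => hy; try case: ifP => ex; try case: ifP => ey; move: hx hy;
  rewrite ?ex ?ey; lia.
Qed.

Lemma cyc_range c : (b <= c) && (c < b + p) -> (b <= cyc c) && (cyc c < b + p).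
Proof. move=> h; rewrite /cyc h; case: ifP => e; move: h e; lia. Qed.

Lemma iter_cyc n c : (b <= c) && (c < b + p) -> iter n cyc c = b + (c - b + n) %% p.
Proof.
move=> /andP [hc1 hc2]; elim: n => [|n IH]; first by rewrite /= addn0 modn_small; lia.
rewrite iterS IH; set m := c - b + n; rewrite addnS.
have hm : m %% p < p by rewrite ltn_mod; lia.
rewrite /cyc leq_addr ltn_add2l hm /=.
have -> : m.+1 %% p = ((m %% p).+1) %% p by rewrite -addn1 -modnDml addn1.
move: (m %% p) hm => x hx.
case: eqP => e.
  have -> : x.+1 = p by lia.
  by rewrite modnn addn0.
rewrite modn_small; lia.
Qed.

Lemma iter_cyc_p c : iter p cyc c = c.
Proof.
case: (boolP ((b <= c) && (c < b + p))) => hc.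
  by rewrite iter_cyc // modnDr modn_small; move: hc => /andP[]; lia.
elim: p => [|n IH] //=; rewrite IH /cyc (negbTE hc) //.
Qed.

End Cyc.

Lemma iter_inj T (f : T -> T) n : injective f -> injective (iter n f).
Proof. by move=> hf; elim: n => [|n IH] //= x y /hf /IH. Qed.

End P5.
Import P5.

Module P6.
Set Implicit Arguments. Unset Strict Implicit. Unset Printing Implicit Defensive.
Import GRing.Theory.

Section PartB.
Variable la : seq nat.
Hypothesis hla : sorted geq la.
Local Notation N := (sumn la).
Variables (i p : nat).
Hypothesis hp2 : 1 < p.
Hypothesis hi : nth 0 la i.+1 + p <= nth 0 la i.
Local Notation b := (nth 0 la i.+1).
Local Notation cy := (cyc b p).

Lemma cyc_ok (q : 'I_N) : cy (col q) < nth 0 la (row q).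
Proof.
have hc := col_lt q; rewrite /cyc; case: ifP => // /andP [h1 h2].
have hr : row q <= i.
  rewrite leqNgt; apply/negP => hr.
  have := nth_mono hla hr; lia.
have := nth_mono hla hr; case: eqP => e; lia.
Qed.

Definition Mf (q : 'I_N) : 'I_N := mkpos q (row q) (cy (col q)).
Lemma Mf_row q : row (Mf q) = row q.
Proof. exact: mkpos_row (cyc_ok q). Qed.
Lemma Mf_col q : col (Mf q) = cy (col q).
Proof. exact: mkpos_col (cyc_ok q). Qed.
Lemma Mf_inj : injective Mf.
Proof.
move=> x y e; apply: pos_eq; first by rewrite -Mf_row e Mf_row.
by apply: (@cyc_inj b p hp2); rewrite -!Mf_col e.
Qed.
Definition M : 'S_N := perm Mf_inj.

Lemma Mn_prop n q : row ((M ^+ n)%g q) = row q /\ col ((M ^+ n)%g q) = iter n cy (col q).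
Proof.
elim: n q => [|n IH] q; first by rewrite expg0 perm1.
rewrite expgSr permM permE Mf_row Mf_col; have [-> ->] := IH q; split => //.
Qed.

Lemma Mp1 : (M ^+ p)%g = 1%g.
Proof.
apply/permP => q; rewrite perm1; have [h1 h2] := Mn_prop p q.
by apply: pos_eq => //; rewrite h2 iter_cyc_p.
Qed.

Lemma M_neq1 : M != 1%g.
Proof.
have h0 : 0 < nth 0 la 0 by have := nth_mono hla (leq0n i); lia.
have hN : 0 < N by move: (posn_lt (nth_size h0) h0); rewrite /posn take0.
have hb : b < nth 0 la 0 by have := nth_mono hla (leq0n i); lia.
pose q := mkpos (Ordinal hN) 0 b.
apply/eqP => e; have := Mf_col q; rewrite -(permE Mf_inj) -/M e perm1 /q (mkpos_col _ hb).
rewrite /cyc leqnn /= -{2}(addn0 b) ltn_add2l (ltn_trans _ hp2) //; case: eqP => e2; lia.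
Qed.

Hypothesis pr : prime p.
Lemma pgroupM : pgroup p <[M]>%g.
Proof.
rewrite /pgroup; apply: (@pnat_dvd _ p); last exact: pnat_id.
by rewrite -/(order M) order_dvdn Mp1.
Qed.

End PartB.

End P6.
Import P6.

Module P7.
Set Implicit Arguments. Unset Strict Implicit. Unset Printing Implicit Defensive.
Import GRing.Theory.

Section Act.
Variable la : seq nat.
Local Notation N := (sumn la).
Variables (w v : 'S_N).

Definition tof (s : 'S_N * 'S_N) (a : 'S_N) : 'S_N * 'S_N :=
  ((w^-1 * a^-1 * w * s.1)%g, (v^-1 * a^-1 * v * s.2)%g).

Lemma tof1 : tof^~ 1%g =1 id.
Proof. by case=> x y; rewrite /tof /= invg1 !mulg1 !mulVg !mul1g. Qed.

Lemma tofM s : act_morph tof s.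
Proof.
move=> a b; case: s => x y; rewrite /tof /= invMg.
by congr (_, _); rewrite !mulgA mulgK.
Qed.

Definition tact := TotalAction tof1 tofM.

Section Good.
Variable a : 'S_N.
Variable g : nat -> nat.
Hypothesis ginj : injective g.
Hypothesis arow : forall q, row (a q) = row q.
Hypothesis acol : forall q, col (a q) = g (col q).

Lemma stab_act (u x : 'S_N) : x \in row_stab la u -> (u^-1 * a^-1 * u * x)%g \in row_stab la u.
Proof.
rewrite !inE => /forallP h; apply/forallP => j; rewrite !permM.
rewrite (eqP (h _)) permK.
have := arow (a^-1%g (u^-1%g j)); rewrite permKV => e.
by rewrite -/(row _) -e.
Qed.

Lemma coltab_act (u x : 'S_N) j :
  col_tabloid la (u * (u^-1 * a^-1 * u * x)) j = g (col_tabloid la (u * x) j).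
Proof.
have -> : (u * (u^-1 * a^-1 * u * x) = a^-1 * (u * x))%g by rewrite !mulgA mulgV mul1g.
by rewrite /col_tabloid invMg invgK permM; apply: acol.
Qed.

Lemma odd_act (u x : 'S_N) : odd_perm (u^-1 * a^-1 * u * x)%g = odd_perm a (+) odd_perm x.
Proof.
rewrite !odd_permM !odd_permV.
by case: (odd_perm u); case: (odd_perm a); case: (odd_perm x).
Qed.
End Good.

Definition Sset (c : bool) : {set 'S_N * 'S_N} :=
  [set s : 'S_N * 'S_N | [&& s.1 \in row_stab la w, s.2 \in row_stab la v,
     [forall j, col_tabloid la (w * s.1) j == col_tabloid la (v * s.2) j] &
     (odd_perm s.1 (+) odd_perm s.2) == c]].

Lemma Sset_stable (a : 'S_N) (g : nat -> nat) c s : injective g -> (forall q, row (a q) = row q) ->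
  (forall q, col (a q) = g (col q)) -> s \in Sset c -> tof s a \in Sset c.
Proof.
move=> ginj arow acol; rewrite in_set /tof /= => /and4P [h1 h2 h3 h4].
rewrite in_set /= !(stab_act arow) //=; apply/andP; split.
  apply/forallP => j; rewrite !(coltab_act acol) (inj_eq ginj).
  exact: (forallP h3).
by rewrite !odd_act; move: h4; case: (odd_perm a); case: (odd_perm s.1); case: (odd_perm s.2).
Qed.

End Act.

End P7.
Import P7.

Module P8.
Set Implicit Arguments. Unset Strict Implicit. Unset Printing Implicit Defensive.
Import GRing.Theory.

Section PartB2.
Variable la : seq nat.
Hypothesis hla : sorted geq la.
Local Notation N := (sumn la).
Variables (i p : nat).
Hypothesis hp2 : 1 < p.
Hypothesis hi : nth 0 la i.+1 + p <= nth 0 la i.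
Hypothesis pr : prime p.
Local Notation b := (nth 0 la i.+1).
Local Notation cy := (cyc b p).
Local Notation M := (M hla hp2 hi).
Variables (w v : 'S_N).

Lemma cycM_good a : a \in <[M]>%g -> exists g, [/\ injective g, (forall q, row (a q) = row q) &
  (forall q, col (a q) = g (col q))].
Proof.
case/cycleP => n ->; exists (iter n cy); split.
- exact: iter_inj (cyc_inj hp2).
- by move=> q; have [] := Mn_prop hla hp2 hi n q.
- by move=> q; have [] := Mn_prop hla hp2 hi n q.
Qed.

Lemma acts_S c : [acts <[M]>%g, on Sset w v c | tact w v].
Proof.
have st : forall a s, a \in <[M]>%g -> s \in Sset w v c -> tact w v s a \in Sset w v c.
  move=> a s /cycM_good [g [h1 h2 h3]] hs.
  exact: (Sset_stable h1 h2 h3 hs).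
apply/subsetP => a ha; apply/astabsP => s; apply/idP/idP => hs; last exact: st.
by have := st _ _ (groupVr ha) hs; rewrite actK.
Qed.

Lemma fix_S c : #|('Fix_(Sset w v c | tact w v)(<[M]>))%g| = 0.
Proof.
apply: eq_card0 => s; apply/negP => /setIP [_ /afixP /(_ M (cycle_id M))].
case: s => x y /= [] /(congr1 (fun z => z * x^-1)%g); rewrite mulgK mulgV => e.
have : (M^-1 = 1)%g.
  have -> : (M^-1 = w * (w^-1 * M^-1 * w) * w^-1)%g by rewrite !mulgA mulgV mul1g mulgK.
  by rewrite e mulg1 mulgV.
by move/eqP; rewrite invg_eq1 (negbTE (M_neq1 hla hp2 hi)).
Qed.

Lemma dvd_S c : p %| #|Sset w v c|.
Proof.
have := pgroup_fix_mod (pgroupM hla hp2 hi pr) (acts_S c).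
by rewrite fix_S mod0n => /eqP; rewrite -/(dvdn _ _).
Qed.

Lemma specht_zero (k : fieldType) : p \in [char k]%R -> specht_form k la w v = 0%R.
Proof.
move=> hk.
have hS : forall c, (#|Sset w v c|%:R : k)%R = 0%R.
  by move=> c; apply/eqP; rewrite -(dvdn_pcharf hk) dvd_S.
have sum_ind : forall c, (\sum_(s | (s.1 \in row_stab la w) && (s.2 \in row_stab la v))
     ((s \in Sset w v c) : nat))%N = #|Sset w v c|.
  move=> c; rewrite -sum1_card big_mkcond [RHS]big_mkcond; apply: eq_bigr => s _.
  case: (boolP (s \in Sset w v c)) => hs; last by case: ifP.
  by move: (hs); rewrite in_set => /and4P [-> -> _ _].
have Smem : forall s c, (s \in Sset w v c) = [&& s.1 \in row_stab la w, s.2 \in row_stab la v,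
     [forall j, col_tabloid la (w * s.1) j == col_tabloid la (v * s.2) j] &
     (odd_perm s.1 (+) odd_perm s.2) == c] by move=> s c; rewrite in_set.
rewrite /specht_form pair_big_dep /=.
transitivity (\sum_(s | (s.1 \in row_stab la w) && (s.2 \in row_stab la v))
   (((s \in Sset w v false) : nat)%:R - ((s \in Sset w v true) : nat)%:R) : k)%R.
  apply: eq_bigr => [[x y]] /= /andP [hx hy].
  rewrite !Smem /= hx hy /=.
  case: [forall _, _] => /=; last by rewrite GRing.mulr0 GRing.subr0.
  rewrite GRing.mulr1 -signr_addb; case: (odd_perm x (+) odd_perm y) => /=.
    by rewrite GRing.expr1 GRing.sub0r.
  by rewrite GRing.expr0 GRing.subr0.
by rewrite GRing.sumrB -!GRing.natr_sum !sum_ind !hS GRing.subr0.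
Qed.

End PartB2.

End P8.
Import P8.

Module P9.
Set Implicit Arguments. Unset Strict Implicit. Unset Printing Implicit Defensive.
Import GRing.Theory.

Lemma part_sorted la : is_partition la -> sorted geq la.
Proof. by case/andP. Qed.

Lemma specht_nz (k : fieldType) p la (hla : sorted geq la) : is_char k p -> p_restricted p la ->
  specht_form k la 1%g (nu hla) != 0%R.
Proof. by move=> hc hr; rewrite specht_1nu; apply: card_H_nz hr. Qed.

Lemma specht_restr (k : fieldType) p la (w v : 'S_(sumn la)) : is_char k p -> sorted geq la ->
  specht_form k la w v != 0%R -> p_restricted p la.
Proof.
move=> hc hla hnz; apply/negPn/negP => hnr.
have hp0 : p != 0 by move: hnr; rewrite /p_restricted; case: eqP.
have hk : p \in [char k]%R by case: hc => [[/eqP e _]|//]; rewrite e in hp0.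
have pr := pcharf_prime hk.
have hp2 := prime_gt1 pr.
move: hnr; rewrite /p_restricted (negbTE hp0) /= => /allPn [i hi].
rewrite -leqNgt => hle.
have hi' : nth 0 la i.+1 + p <= nth 0 la i.
  have := nth_mono hla (leqnSn i); lia.
by move: hnz; rewrite (specht_zero hla hp2 hi' pr w v hk) eqxx.
Qed.

End P9.
Import P9.

Module P10.
Set Implicit Arguments. Unset Strict Implicit. Unset Printing Implicit Defensive.
Import GRing.Theory.
Lemma inversions1 n : inversions (1%g : 'S_n) = 0.
Proof.
apply: eq_card0 => ij; rewrite inE !perm1; apply/negP => /andP [h1 h2].
by have := ltn_trans h1 h2; rewrite ltnn.
Qed.

Lemma min_coset1 n mu : min_coset_rep mu (1%g : 'S_n).
Proof. by apply/forall_inP => tau _; rewrite inversions1. Qed.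

Lemma sumn_part_pos la : is_partition la -> la != [::] -> 0 < sumn la.
Proof.
case: la => [|x l] //= /andP [_ /= /andP [hx _]] _; lia.
Qed.

End P10.
Import P10.
Import GRing.Theory.
Unset Implicit Arguments.

Theorem theorem5p2 (k : fieldType) (p : nat) (hp : is_char k p)
  (A : falgType k) (D : cellular_datum A) (n : nat)
  (nu : 'I_(cd_r D) -> seq nat) (hnu : is_multipartition n nu) :
  wreath_form_nonzero D n nu <->
  (forall i : 'I_(cd_r D), ~ in_Lambda0 D i -> nu i = [::]) /\
  (forall i : 'I_(cd_r D), p_restricted p (nu i)).
Proof.
have hpart : forall i, is_partition (nu i) by case: hnu.
split.
  move=> [g [g' [_ _ [x [x' [y [y' hw]]]]]]].
  move: hw; rewrite /wreath_form !mulf_eq0 !negb_or => /andP [/andP [_ hs] hph].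
  split.
    move=> i hL; case E: (nu i) => [|a l] //; exfalso; apply: hL.
    have hpos : 0 < wr_mu nu i by apply: sumn_part_pos; [exact: hpart | rewrite E].
    move/prodf_neq0: hph => /(_ i isT) /prodf_neq0 /(_ (Ordinal hpos) isT) h.
    by exists (x i (Ordinal hpos)), (x' i (Ordinal hpos)).
  move=> i; move/prodf_neq0: hs => /(_ i isT) h.
  exact: specht_restr hp (part_sorted (hpart i)) h.
move=> [hL hR].
have lem : forall i, 'I_(wr_mu nu i) ->
    exists st : 'I_(cd_M D i) * 'I_(cd_M D i), cd_phi D i st.1 st.2 != 0%R.
  move=> i j.
  case: (boolP [exists st : 'I_(cd_M D i) * 'I_(cd_M D i), cd_phi D i st.1 st.2 != 0%R]).
    by move/existsP.
  move=> hn; exfalso.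
  have : nu i = [::].
    apply: hL => -[s [t hst]]; apply: (negP hn); apply/existsP; by exists (s, t).
  by move=> E; have := ltn_ord j; rewrite {2}/wr_mu E.
pose x := fun i (j : 'I_(wr_mu nu i)) => (sval (sigW (lem i j))).1.
pose x' := fun i (j : 'I_(wr_mu nu i)) => (sval (sigW (lem i j))).2.
exists 1%g, 1%g; split; try exact: min_coset1.
exists x, x', (fun i => 1%g), (fun i => P2.nu (part_sorted (hpart i))).
rewrite /wreath_form eqxx mul1r mulf_neq0 //.
  apply/prodf_neq0 => i _; exact: specht_nz hp (hR i).
apply/prodf_neq0 => i _; apply/prodf_neq0 => j _.
by rewrite /x /x'; case: (sigW (lem i j)).
Qed.
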